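(* Let $\mathbb{A}$ be a set of symbols and let $A=a_1a_2\dots a_m$ be a rainbow sequence with $a_i\in\mathbb{A}$ for all $i=1,\dots,m$. Let $r\ge 0$ and $1\le n_1<n_2<\dots<n_r<m$ be integers, and let $B^0,B^1,\dots,B^{r+1}$ be single symbols (not necessarily distinct from each other) with $B^i\notin\mathbb{A}$ for all $i$. Then the sequence $$S=B^0\,A_{1,n_1}\,B^1\,A_{n_1+1,n_2}\,\dots\,B^r\,A_{n_r+1,m}\,B^{r+1}$$ is nonrepetitive.
   Context: A finite sequence $R=r_1r_2\dots r_{2n}$ ($n\ge1$) is a repetition if $r_i=r_{n+i}$ for all $i=1,\dots,n$. A sequence is repetitive if some block of consecutive terms of it is a repetition, and nonrepetitive otherwise. A sequence of length $k$ consisting of $k$ pairwise different symbols is called rainbow. For a sequence $A=a_1\dots a_m$ and $1\le k\le l\le m$, $A_{k,l}$ denotes the block $a_ka_{k+1}\dots a_l$. *)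

(* Defs.v *)
From mathcomp Require Import all_boot.
Set Implicit Arguments. Unset Strict Implicit. Unset Printing Implicit Defensive.

(* A finite sequence R is a repetition if |R| = 2n, n >= 1, and r_i = r_{n+i}
   for all i = 1..n (here 0-indexed via onth). *)
Definition repetition (T : eqType) (R : seq T) : Prop :=
  exists n, 0 < n /\ size R = 2 * n /\
    forall i, i < n -> onth R i = onth R (n + i).

Definition repetitive (T : eqType) (S : seq T) : Prop :=
  exists u w v : seq T, S = u ++ w ++ v /\ repetition w.

Definition nonrepetitive (T : eqType) (S : seq T) : Prop := ~ repetitive S.

Definition rainbow (T : eqType) (S : seq T) : bool := uniq S.

(* A_{k,l} = a_k ... a_l (1-indexed, k <= l) *)
Definition block (T : Type) (A : seq T) (k l : nat) : seq T :=
  take (l - k + 1) (drop k.-1 A).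

Definition bound (r m : nat) (n : nat -> nat) (i : nat) : nat :=
  if i == 0 then 0 else if i == r.+1 then m else n i.

(* S = B^0 A_{1,n_1} B^1 A_{n_1+1,n_2} ... B^r A_{n_r+1,m} B^{r+1} *)
Definition interleave (T : Type) (A : seq T) (r : nat) (n : nat -> nat)
    (B : nat -> T) : seq T :=
  B 0 :: flatten [seq block A (bound r (size A) n i).+1 (bound r (size A) n i.+1)
                        ++ [:: B i.+1] | i <- iota 0 r.+1].

(* Main.v *)
Require Import Defs.
From mathcomp Require Import all_boot.
From mathcomp Require Import zify.

Lemma two_occ (T : eqType) (w : seq T) (d z : T) (j k : nat) :
  j < k -> k + j < size w -> nth d w j = z -> nth d w (k + j) = z ->
  1 < count_mem z w.
Proof.
move=> jk kjs Hj Hkj.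
rewrite -(cat_take_drop (k + j) w) count_cat.
rewrite (drop_nth d kjs) /= Hkj eqxx.
have : z \in take (k + j) w.
  rewrite -Hj -(nth_take d (_ : j < k + j)); last by lia.
  apply: mem_nth; rewrite size_takel; lia.
rewrite -has_pred1 has_count => H. lia.
Qed.

Lemma nonrep_gen (T : eqType) (a : pred T) (S : seq T) :
  uniq (filter a S) -> sorted (fun x y => a x || a y) S -> nonrepetitive S.
Proof.
move=> Hu Hs [u [w [v [HS [k [k0 [Hsz Hk]]]]]]].
subst S.
have Huw : uniq (filter a w).
  by move: Hu; rewrite !filter_cat !cat_uniq => /and3P[_ _ /andP[]].
have Hsw : sorted (fun x y => a x || a y) w.
  by have [_ /cat_sorted2 [] ] := cat_sorted2 Hs.
have Hn : forall d i, i < k -> nth d w i = nth d w (k + i).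
  by move=> d i /Hk E; rewrite -!odflt_onth E.
have Hcnt : forall z, a z -> count_mem z w <= 1.
  move=> z az.
  have -> : count_mem z w = count_mem z (filter a w).
    rewrite count_filter; apply: eq_count => y /=.
    by case: (eqVneq y z) => [->|]; rewrite ?az.
  by rewrite count_uniq_mem // leq_b1.
clear Hu Hs Hk; case: w Hsz Hsw Hn Huw Hcnt => [|x [|y w']] Hsz Hsw Hn Huw Hcnt; try (simpl in Hsz; lia).
move: Hsw => /= /andP[Hxy _].
case ax: (a x).
  have := @two_occ _ [:: x, y & w'] x x 0 k k0 _ erefl (esym (Hn x 0 k0)).
  rewrite /= addn0 => H. have := Hcnt x ax. move: H Hsz => /=. lia.
rewrite ax /= in Hxy.
case: (eqVneq k 1) => [k1|kn1].
  subst k. have := Hn x 0 isT. by rewrite /= => E; rewrite -E ax in Hxy.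
have k1 : 1 < k by lia.
have := @two_occ _ [:: x, y & w'] x y 1 k k1 _ erefl (esym (Hn x 1 k1)).
move=> H. have := Hcnt y Hxy. move: H Hsz => /=. lia.
Qed.

Lemma mono_range (b : nat -> nat) (k j : nat) :
  (forall i, k <= i < k + j -> b i <= b i.+1) ->
  forall l, l <= j -> b k <= b (k + l).
Proof.
move=> Hb; elim=> [|l IHl] Hl; first by rewrite addn0.
apply: leq_trans (IHl (ltnW Hl)) _; rewrite addnS; apply: Hb; lia.
Qed.

Lemma flatten_chunks (T : Type) (A : seq T) (b : nat -> nat) (k j : nat) :
  (forall i, k <= i < k + j -> b i <= b i.+1) ->
  flatten [seq take (b i.+1 - b i) (drop (b i) A) | i <- iota k j]
  = take (b (k + j) - b k) (drop (b k) A).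
Proof.
elim: j k => [|j IH] k Hb; first by rewrite addn0 subnn take0.
have Hb' : forall i, k.+1 <= i < k.+1 + j -> b i <= b i.+1.
  by move=> i Hi; apply: Hb; lia.
have h1 := @mono_range b k j.+1 Hb 1 (isT : 1 <= j.+1).
have h3 := @mono_range b k.+1 j Hb' j (leqnn j).
rewrite /= IH // addn1 in h1 *.
have -> : drop (b k.+1) A = drop (b k.+1 - b k) (drop (b k) A) by rewrite drop_drop subnK.
rewrite -takeD addSnnS; congr take; rewrite addSnnS in h3; lia.
Qed.

Lemma path_all (T : eqType) (a : pred T) (x : T) (s : seq T) :
  all a s -> path (fun x y => a x || a y) x s.
Proof.
elim: s x => [|y s IH] x //= /andP[ay As]; by rewrite ay orbT IH.
Qed.

Lemma path_chunks (T : eqType) (a : pred T) (C : nat -> seq T) (B : nat -> T)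
   (P : pred nat) (s : seq nat) (x : T) :
  (forall i, P i -> all a (C i) /\ 0 < size (C i)) -> all P s ->
  path (fun x y => a x || a y) x (flatten [seq C i ++ [:: B i.+1] | i <- s]).
Proof.
move=> HC; elim: s x => [|i s IH] x //= /andP[Pi As].
have [aC sC] := HC i Pi.
rewrite -catA cat_path path_all //=.
case E: (C i) sC aC => [|c c'] // _ aC.
rewrite /= IH // andbT.
have : last c c' \in c :: c' by apply: mem_last.
by move/(allP aC) => ->.
Qed.

Lemma filter_chunks (T : eqType) (a : pred T) (C : nat -> seq T) (B : nat -> T)
   (P : pred nat) (s : seq nat) :
  (forall i, P i -> all a (C i) /\ ~~ a (B i.+1)) -> all P s ->
  filter a (flatten [seq C i ++ [:: B i.+1] | i <- s]) = flatten [seq C i | i <- s].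
Proof.
move=> HC; elim: s => [|i s IH]; first by []. move=> /= /andP[Pi As].
have [aC aB] := HC i Pi.
rewrite !filter_cat (all_filterP aC) /= (negbTE aB). by rewrite cats0 IH.
Qed.

Theorem corollary2 (T : eqType) (symA : pred T) (A : seq T)
    (r : nat) (n : nat -> nat) (B : nat -> T) :
  0 < size A ->
  rainbow A ->
  (forall x, x \in A -> symA x) ->
  (forall i, 1 <= i < r -> n i < n i.+1) ->
  (0 < r -> 1 <= n 1 /\ n r < size A) ->
  (forall i, i <= r.+1 -> ~~ symA (B i)) ->
  nonrepetitive (interleave A r n B).
Proof.
move=> Hm Hu HA Hn Hr HB.
set m := size A.
set b := bound r m n.
have Hlt : forall i, i <= r -> b i < b i.+1.
  move=> i Hi; rewrite /b /bound /=.
  case: i Hi => [|i] Hi /=.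
    have [-> //|rp] := posnP r.
    have [h1 _] := Hr rp. by case: ifP => _.
  have [h1 h2] := Hr (leq_ltn_trans (leq0n i) Hi).
  case: ifP => /eqP E1; first lia.
  case: ifP => /eqP E2.
    by have -> : i.+1 = r by lia.
  apply: Hn; lia.
have Hle : forall i, i <= r.+1 -> b i <= m.
  move=> i Hi.
  have := @mono_range b i (r.+1 - i) _ (r.+1 - i) (leqnn _).
  rewrite subnKC // /b /bound /= eqxx; case: (eqVneq r.+1 0) => // _; apply.
  move=> j Hj; apply: ltnW; apply: Hlt; lia.
set C := fun i => take (b i.+1 - b i) (drop (b i) A).
have HS : interleave A r n B = B 0 :: flatten [seq C i ++ [:: B i.+1] | i <- iota 0 r.+1].
  rewrite /interleave; congr cons; congr flatten; apply/eq_in_map => i.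
  rewrite mem_iota add0n => /andP[_ Hi].
  rewrite /block /C -/m -/b; congr cat; congr take.
  have := Hlt i Hi. lia.
have HC : forall i, i <= r -> all symA (C i) /\ 0 < size (C i).
  move=> i Hi; split.
    apply/allP => x /mem_take /mem_drop; exact: HA.
  rewrite /C size_take size_drop; have := Hlt i Hi; have := Hle i.+1 Hi.
  rewrite -/m; move: (b i) (b i.+1) => x y; clearbody m; move=> ? ?; case: (ltnP (y - x) (m - x)) => ?; lia.
have Pall : all (fun i => i <= r) (iota 0 r.+1).
  by apply/allP => i; rewrite mem_iota add0n.
rewrite HS; apply: (@nonrep_gen _ symA).
  rewrite (lock iota) /= (negbTE (HB 0 isT)) -lock.
  rewrite (@filter_chunks _ symA C B (fun i => i <= r)) //; last first.
    move=> i Hi; split; first by have [] := HC i Hi.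
    exact: HB.
  rewrite (@flatten_chunks _ A b 0 r.+1); last by move=> i Hi; apply: ltnW; apply: Hlt; lia.
  rewrite add0n /b /bound /= eqxx subn0 drop0 take_size.
  exact: Hu.
rewrite (lock iota) /= -lock; apply: (@path_chunks _ symA C B (fun i => i <= r)) => //.
Qed.
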